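(* Let $G=(V,E,\mathbf{X})$ be a finite graph with node features $\mathbf{X}[v]\in\mathbb{R}^t$ for $v\in V$, and let $G_1=(V_1,E_1,\mathbf{X}_1),\dots,G_q=(V_q,E_q,\mathbf{X}_q)$ be the subgraphs produced from $G$ by a subgraph generation policy, where $V_j\subseteq V$ and $\mathbf{X}_j[v]\in\mathbb{R}^t$. Fix $L\ge 1$ message-passing layers $\mathtt{MPNN}_1,\dots,\mathtt{MPNN}_L$ (with aggregate functions $AGG_i$ and combine functions $COM_i$) and a pooling function $\mathtt{pool}$. Conventional subgraph GNN: for each $j$, set $\mathbf{H}_j^{(0)}=\mathbf{X}_j$ and for $1\le i\le L$, $v\in V_j$, $\mathbf{H}_j^{(i)}[v]=COM_i\big(AGG_i(\{\!\{\mathbf{H}_j^{(i-1)}[u]:u\in\mathcal{N}_j(v)\}\!\}),\mathbf{H}_j^{(i-1)}[v]\big)$; the output is $Y=\mathtt{pool}(\mathbf{H}_1^{(L)},\dots,\mathbf{H}_q^{(L)})$. ENFA: set $\mathbf{H}_o^{(0)}=\mathbf{X}$ and $\widehat{\mathbf{H}}_j^{(0)}=\mathbf{X}_j$. For $1\le i\le L$: compute $\mathbf{H}_o^{(i)}$ by applying $\mathtt{MPNN}_i$ to $\mathbf{H}_o^{(i-1)}$ on the original graph $G$ (neighborhoods $\mathcal{N}(v)$); for each $j$, compute $\widehat{\mathbf{H}}_j^{(i)}$ by applying $\mathtt{MPNN}_i$ to $\widehat{\mathbf{H}}_j^{(i-1)}$ on the $(L+1)$-hop ego net $G_j^{L+1}$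 of $\mathtt{pvt}(G_j)$ in $G_j$ (nodes of $V_j$ not in this ego net have no neighbors); then for every $v\in V_j$ with $\mathtt{phop}_j(v)>i$ overwrite $\widehat{\mathbf{H}}_j^{(i)}[v]:=\mathbf{H}_o^{(i)}[v]$. The ENFA output is $\widehat{Y}=\mathtt{pool}(\widehat{\mathbf{H}}_1^{(L)},\dots,\widehat{\mathbf{H}}_q^{(L)})$. Then for every $j\in\{1,\dots,q\}$ and every node $v$ of the ego net $G_j^{L+1}$, $\widehat{\mathbf{H}}_j^{(L)}[v]=\mathbf{H}_j^{(L)}[v]$; consequently $\widehat{Y}=Y$.
   Context: $\mathcal{N}(v)$ denotes the neighbors of $v$ in $G$ and $\mathcal{N}_j(v)$ the neighbors of $v$ in $G_j$; $\{\!\{\cdot\}\!\}$ denotes a multiset. The pivot nodes of $G_j$ are $\mathtt{pvt}(G_j)=\{v\in V_j:\mathcal{N}(v)\ne\mathcal{N}_j(v)\text{ or }\mathbf{X}[v]\ne\mathbf{X}_j[v]\}$, i.e. the nodes whose neighborhood or features differ between $G_j$ and $G$. The pivot hop of $v\in V_j$ is $\mathtt{phop}_j(v)=\min\{\mathtt{hop}^j(v,w):w\in\mathtt{pvt}(G_j)\}$, where $\mathtt{hop}^j$ is the shortest-path distance in $G_j$ (the minimum over an empty set is $+\infty$). The $h$-hop ego net $G_j^{h}$ of $\mathtt{pvt}(G_j)$ in $G_j$ is the subgraph of $G_j$ induced on the nodes $v\in V_j$ with $\mathtt{phop}_j(v)\le h$, with features inherited from $\mathbf{X}_j$. Examples of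 policies: node-marking (each subgraph is $G$ with an extra feature column marking one root node, the original graph being taken with that column equal to zero), node-deleting (delete one node and its incident edges), edge-deleting (delete one edge). The same layers $\mathtt{MPNN}_i$ (same parameters) are used on $G$ and on all subgraphs. *)

(* Defs.v *)
From HB Require Import structures.
From mathcomp Require Import all_boot all_order all_algebra.
From mathcomp Require Import finmap multiset.
From mathcomp Require Import reals.

Set Implicit Arguments.
Unset Strict Implicit.
Unset Printing Implicit Defensive.

Import Order.TTheory GRing.Theory Num.Theory.
Local Open Scope ring_scope.

(* Extended naturals: [None] stands for +infinity. *)
Definition omin (a b : option nat) : option nat :=
  match a, b with
  | None, _ => b
  | _, None => a
  | Some x, Some y => Some (minn x y)
  end.

Definition ole (a : option nat) (h : nat) : bool :=
  if a is Some x then (x <= h)%N else false.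

Section Graphs.
Variable V : finType.

Fixpoint within (E : rel V) (k : nat) (v w : V) : bool :=
  if k is k'.+1 then within E k' v w || [exists u, E v u && within E k' u w]
  else v == w.

(* shortest-path distance (hop count) along E; None = +oo (no path).
   In a finite graph a shortest walk has length < #|V|. *)
Definition hop (E : rel V) (v w : V) : option nat :=
  let k := find (fun k => within E k v w) (iota 0 #|V|) in
  if (k < #|V|)%N then Some k else None.

Definition nbhd (E : rel V) (v : V) : {set V} := [set u | E v u].

End Graphs.

Section GNN.
Variables (R : realType) (V : finType).
(* original graph G = (V, E, X); feature dimensions d i at layer i (t = d 0) *)
Variable (d a : nat -> nat).
Variables (E : rel V) (X : V -> 'rV[R]_(d 0%N)).
Variables (q : nat) (Vs : 'I_q -> {set V}) (Es : 'I_q -> rel V)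
          (Xs : 'I_q -> V -> 'rV[R]_(d 0%N)).
(* number of layers; layer i.+1 (i < L) has aggregate AGG i and combine COM i *)
Variable (L : nat).
Variable AGG : forall i, multiset 'rV[R]_(d i) -> 'rV[R]_(a i).
Variable COM : forall i, 'rV[R]_(a i) -> 'rV[R]_(d i) -> 'rV[R]_(d i.+1).

Definition mpnn (i : nat) (N : V -> {set V}) (H : V -> 'rV[R]_(d i)) :
    V -> 'rV[R]_(d i.+1) :=
  fun v => COM (AGG (seq_mset [seq H u | u <- enum (N v)])) (H v).

Definition pvt (j : 'I_q) : {set V} :=
  [set v in Vs j | (nbhd E v != nbhd (Es j) v) || (X v != Xs j v)].

Definition phop (j : 'I_q) (v : V) : option nat :=
  \big[omin/None]_(w in pvt j) hop (Es j) v w.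

Definition egonet (j : 'I_q) (h : nat) : {set V} :=
  [set v in Vs j | ole (phop j v) h].

(* Representations of nodes of G_j are stored as functions on V, with the
   value 0 on nodes outside V_j (which carry no representation). *)

Fixpoint Hsub (j : 'I_q) (i : nat) : V -> 'rV[R]_(d i) :=
  match i with
  | 0 => fun v => if v \in Vs j then Xs j v else 0
  | i'.+1 => fun v => if v \in Vs j then mpnn (nbhd (Es j)) (Hsub j i') v else 0
  end.

Fixpoint Horig (i : nat) : V -> 'rV[R]_(d i) :=
  match i with
  | 0 => X
  | i'.+1 => mpnn (nbhd E) (Horig i')
  end.

Definition ego_nbhd (j : 'I_q) (v : V) : {set V} :=
  if v \in egonet j L.+1 then [set u in egonet j L.+1 | Es j v u] else set0.

Fixpoint Henfa (j : 'I_q) (i : nat) : V -> 'rV[R]_(d i) :=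
  match i with
  | 0 => fun v => if v \in Vs j then Xs j v else 0
  | i'.+1 => fun v =>
      if v \in Vs j then
        (if ~~ ole (phop j v) i'.+1 then Horig i'.+1 v
         else mpnn (ego_nbhd j) (Henfa j i') v)
      else 0
  end.

End GNN.

(* Main.v *)
Require Import Defs.
From HB Require Import structures.
From mathcomp Require Import all_boot all_order all_algebra.
From mathcomp Require Import finmap multiset.
From mathcomp Require Import reals.
Local Open Scope ring_scope.

Set Implicit Arguments. Unset Strict Implicit. Unset Printing Implicit Defensive.

Lemma within_S (V : finType) (E : rel V) k v w : within E k v w -> within E k.+1 v w.
Proof. by move=> h /=; rewrite h. Qed.

Lemma within_le (V : finType) (E : rel V) k m v w : (k <= m)%N -> within E k v w -> within E m v w.
Proof.
move=> hkm h; elim: m hkm => [|m IH]; first by rewrite leqn0 => /eqP <-.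
rewrite leq_eqVlt => /orP[/eqP <- //| hlt]; exact/within_S/IH.
Qed.

Definition wset (V : finType) (E : rel V) w k : {set V} := [set v | within E k v w].

Lemma wsetS (V : finType) (E : rel V) w k :
  wset E w k.+1 = [set v | (v \in wset E w k) || [exists u, E v u && (u \in wset E w k)]].
Proof.
apply/setP => v; rewrite !inE /=; congr (_ || _).
by apply/eq_existsb => u; rewrite inE.
Qed.

Lemma wset_stable (V : finType) (E : rel V) w n m :
  wset E w n = wset E w n.+1 -> (n <= m)%N -> wset E w m = wset E w n.
Proof.
move=> hn; elim: m => [|m IH]; first by rewrite leqn0 => /eqP ->.
rewrite leq_eqVlt => /orP[/eqP <- //| hlt].
by rewrite wsetS IH // -wsetS.
Qed.

Lemma wset_grow (V : finType) (E : rel V) w n :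
  (forall m, (m < n)%N -> wset E w m != wset E w m.+1) -> (n < #|wset E w n|)%N.
Proof.
elim: n => [|n IH] h.
  by apply/card_gt0P; exists w; rewrite inE /=.
have := IH (fun m hm => h m (ltnW hm)).
move=> hlt; apply: (leq_ltn_trans hlt); apply: proper_card.
rewrite properEneq h //=.
by apply/subsetP => v; rewrite !inE /= => ->.
Qed.

Lemma within_short (V : finType) (E : rel V) k v w :
  within E k v w -> exists m, [/\ (m < #|V|)%N, (m <= k)%N & within E m v w].
Proof.
move=> hk.
case: (ltnP k #|V|) => hkV; first by exists k.
have [m hm hP] : exists2 m, (m < #|V|)%N & wset E w m = wset E w m.+1.
  case: (boolP (has (fun m => wset E w m == wset E w m.+1) (iota 0 #|V|))).
    by case/hasP => m; rewrite mem_iota add0n => hm /eqP ?; exists m.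
  move/hasPn => hn.
  have : (#|V| < #|wset E w #|V| |)%N.
    by apply: wset_grow => m hm; apply: hn; rewrite mem_iota.
  by rewrite ltnNge max_card.
exists m; split => //; first by rewrite ltnW // (leq_trans hm).
have : v \in wset E w k by rewrite inE.
by rewrite (wset_stable hP (leq_trans (ltnW hm) hkV)) inE.
Qed.

Lemma hop_some (V : finType) (E : rel V) k v w :
  within E k v w -> exists2 k', hop E v w = Some k' & (k' <= k)%N.
Proof.
case/within_short => m [hm hmk hw].
have hf : (find (fun k => within E k v w) (iota 0 #|V|) <= m)%N.
  rewrite leqNgt; apply/negP => /(before_find 0).
  by rewrite nth_iota // add0n hw.
exists (find (fun k => within E k v w) (iota 0 #|V|)); last exact: leq_trans hmk.
by rewrite /hop (leq_ltn_trans hf hm).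
Qed.

Lemma hop_within (V : finType) (E : rel V) k v w :
  hop E v w = Some k -> within E k v w.
Proof.
rewrite /hop; case: ifP => // hlt [<-].
have := nth_find 0 (_ : has (fun k => within E k v w) (iota 0 #|V|)).
rewrite nth_iota // add0n; apply; by rewrite has_find size_iota.
Qed.

Definition ole' (a : option nat) (h : nat) := ole a h.

Lemma ole_mono a k m : ole a k -> (k <= m)%N -> ole a m.
Proof. by case: a => //= x h1 h2; apply: leq_trans h1 h2. Qed.

Lemma big_omin_le (I : eqType) (s : seq I) (P : pred I) (F : I -> option nat) w k :
  w \in s -> P w -> ole (F w) k -> ole (\big[omin/None]_(i <- s | P i) F i) k.
Proof.
elim: s => // x s IH; rewrite in_cons big_cons => /orP[/eqP ->|ws] Pw Fw.
  rewrite Pw; case: (F x) Fw => //= a ha.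
  by case: (\big[omin/None]_(i <- s | P i) F i) => //= b; rewrite geq_min ha.
have := IH ws Pw Fw; case: (P x) => //.
case: (\big[omin/None]_(i <- s | P i) F i) => //= b hb.
by case: (F x) => //= c; rewrite geq_min hb orbT.
Qed.

Lemma big_omin_ge (I : eqType) (s : seq I) (P : pred I) (F : I -> option nat) k :
  ole (\big[omin/None]_(i <- s | P i) F i) k -> exists w, [/\ w \in s, P w & ole (F w) k].
Proof.
elim: s => [|x s IH]; first by rewrite big_nil.
rewrite big_cons.
have hx : ole (F x) k -> P x -> exists w, [/\ w \in x :: s, P w & ole (F w) k].
  by move=> h1 h2; exists x; rewrite mem_head.
have hs : ole (\big[omin/None]_(i <- s | P i) F i) k ->
   exists w, [/\ w \in x :: s, P w & ole (F w) k].
  by case/IH => w [h1 h2 h3]; exists w; rewrite in_cons h1 orbT.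
case: (P x) hx => [hx|_]; last exact: hs.
move: hs; case: (\big[omin/None]_(i <- s | P i) F i) => [b|] hs;
  case: (F x) hx => [c|] hx //=; try by move=> h; apply: hx.
rewrite geq_min => /orP[h|h]; first exact: hx.
exact: hs.
Qed.

Lemma phop_le (R : realType) (V : finType) (d : nat -> nat)
  (E : rel V) (X : V -> 'rV[R]_(d 0%N))
  (q : nat) (Vs : 'I_q -> {set V}) (Es : 'I_q -> rel V)
  (Xs : 'I_q -> V -> 'rV[R]_(d 0%N)) j v w k :
  w \in pvt E X Vs Es Xs j -> hop (Es j) v w = Some k -> ole (phop E X Vs Es Xs j v) k.
Proof.
move=> hw hk; rewrite /phop; apply: (big_omin_le (w := w)) => //.
by rewrite hk /=.
Qed.

Lemma phop_step (R : realType) (V : finType) (d : nat -> nat)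
  (E : rel V) (X : V -> 'rV[R]_(d 0%N))
  (q : nat) (Vs : 'I_q -> {set V}) (Es : 'I_q -> rel V)
  (Xs : 'I_q -> V -> 'rV[R]_(d 0%N)) j v u k :
  Es j v u -> ole (phop E X Vs Es Xs j u) k -> ole (phop E X Vs Es Xs j v) k.+1.
Proof.
move=> Evu; case/big_omin_ge => w [_ hw hu].
case e: (hop (Es j) u w) hu => [k'|] //= hk'.
have hwi := hop_within e.
have : within (Es j) k'.+1 v w.
  by rewrite /=; apply/orP; right; apply/existsP; exists u; rewrite Evu hwi.
case/hop_some => m hm hmk.
apply: ole_mono (phop_le hw hm) _; apply: leq_trans hmk _; by rewrite ltnS.
Qed.

Lemma nonpivot (R : realType) (V : finType) (d : nat -> nat)
  (E : rel V) (X : V -> 'rV[R]_(d 0%N))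
  (q : nat) (Vs : 'I_q -> {set V}) (Es : 'I_q -> rel V)
  (Xs : 'I_q -> V -> 'rV[R]_(d 0%N)) j v i :
  v \in Vs j -> ~~ ole (phop E X Vs Es Xs j v) i ->
  nbhd E v = nbhd (Es j) v /\ X v = Xs j v.
Proof.
move=> vV h.
have : v \notin pvt E X Vs Es Xs j.
  apply: contra h => hv.
  have : within (Es j) 0 v v by rewrite /=.
  case/hop_some => m hm; rewrite leqn0 => /eqP hm0; rewrite hm0 in hm.
  by apply: ole_mono (phop_le hv hm) _.
by rewrite inE vV /= negb_or !negbK => /andP[/eqP -> /eqP ->].
Qed.

Lemma lemA (R : realType) (V : finType) (d a : nat -> nat)
  (E : rel V) (X : V -> 'rV[R]_(d 0%N))
  (q : nat) (Vs : 'I_q -> {set V}) (Es : 'I_q -> rel V)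
  (Xs : 'I_q -> V -> 'rV[R]_(d 0%N))
  (AGG : forall i, multiset 'rV[R]_(d i) -> 'rV[R]_(a i))
  (COM : forall i, 'rV[R]_(a i) -> 'rV[R]_(d i) -> 'rV[R]_(d i.+1)) j :
  (forall u w, Es j u w -> (u \in Vs j) && (w \in Vs j)) ->
  forall i v, v \in Vs j -> ~~ ole (phop E X Vs Es Xs j v) i ->
  Hsub Vs Es Xs AGG COM j i v = Horig E X AGG COM i v.
Proof.
move=> hE; elim => [|i IH] v vV h.
  by have [_ hx] := nonpivot vV h; rewrite /= vV hx.
have [hn _] := nonpivot vV h.
rewrite /= vV /mpnn hn; congr (COM _ (AGG _ (seq_mset _)) _).
  apply/eq_in_map => u; rewrite mem_enum inE => Evu.
  apply: IH; first by case/andP: (hE _ _ Evu).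
  by apply: contra h; apply: phop_step.
apply: IH => //; apply: contra h => h'; exact: ole_mono h' (leqnSn _).
Qed.

Lemma lemC (R : realType) (V : finType) (d a : nat -> nat)
  (E : rel V) (X : V -> 'rV[R]_(d 0%N))
  (q : nat) (Vs : 'I_q -> {set V}) (Es : 'I_q -> rel V)
  (Xs : 'I_q -> V -> 'rV[R]_(d 0%N)) (L : nat)
  (AGG : forall i, multiset 'rV[R]_(d i) -> 'rV[R]_(a i))
  (COM : forall i, 'rV[R]_(a i) -> 'rV[R]_(d i) -> 'rV[R]_(d i.+1)) j :
  symmetric (Es j) ->
  (forall u w, Es j u w -> (u \in Vs j) && (w \in Vs j)) ->
  forall i, (i <= L)%N -> forall v,
  Henfa E X Vs Es Xs L AGG COM j i v = Hsub Vs Es Xs AGG COM j i v.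
Proof.
move=> hsym hE; elim => [|i IH] hi v //.
have -> : Henfa E X Vs Es Xs L AGG COM j i.+1 v =
  if v \in Vs j then
    (if ~~ ole (phop E X Vs Es Xs j v) i.+1 then Horig E X AGG COM i.+1 v
     else mpnn AGG COM (ego_nbhd E X Vs Es Xs L j) (Henfa E X Vs Es Xs L AGG COM j i) v)
  else 0%R by [].
have -> : Hsub Vs Es Xs AGG COM j i.+1 v =
  if v \in Vs j then mpnn AGG COM (nbhd (Es j)) (Hsub Vs Es Xs AGG COM j i) v else 0%R by [].
case vV: (v \in Vs j) => //.
case: ifP => hole.
  by rewrite -(@lemA _ _ _ _ E X _ Vs Es Xs AGG COM j hE i.+1 v vV hole) /= vV.
move/negbT: hole; rewrite negbK => hole.
have hego : ego_nbhd E X Vs Es Xs L j v = nbhd (Es j) v.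
  rewrite /ego_nbhd inE vV /= (ole_mono hole) //; last exact: ltnW.
  apply/setP => u; rewrite !inE; case Evu: (Es j v u); rewrite ?andbF ?andbT //.
  case/andP: (hE _ _ Evu) => _ ->; rewrite /=.
  have Euv : Es j u v by rewrite hsym.
  by apply: ole_mono (phop_step Euv hole) _.
rewrite /mpnn hego; congr (COM _ (AGG _ (seq_mset _)) _).
  by apply/eq_map => u; apply: IH; apply: ltnW.
by apply: IH; apply: ltnW.
Qed.

Theorem theorem1 (R : realType) (V : finType) (d a : nat -> nat)
  (E : rel V) (X : V -> 'rV[R]_(d 0%N))
  (q : nat) (Vs : 'I_q -> {set V}) (Es : 'I_q -> rel V)
  (Xs : 'I_q -> V -> 'rV[R]_(d 0%N))
  (L : nat)
  (AGG : forall i, multiset 'rV[R]_(d i) -> 'rV[R]_(a i))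
  (COM : forall i, 'rV[R]_(a i) -> 'rV[R]_(d i) -> 'rV[R]_(d i.+1))
  (O : Type) (pool : ('I_q -> V -> 'rV[R]_(d L)) -> O) :
  (* G is a simple (undirected, loopless) graph *)
  symmetric E -> irreflexive E ->
  (* each G_j is a simple graph on the node set Vs j *)
  (forall j, symmetric (Es j)) -> (forall j, irreflexive (Es j)) ->
  (forall j u w, Es j u w -> (u \in Vs j) && (w \in Vs j)) ->
  (1 <= L)%N ->
  (forall (j : 'I_q) (v : V), v \in egonet E X Vs Es Xs j L.+1 ->
      Henfa E X Vs Es Xs L AGG COM j L v = Hsub Vs Es Xs AGG COM j L v)
  /\ pool (fun j => Henfa E X Vs Es Xs L AGG COM j L)
     = pool (fun j => Hsub Vs Es Xs AGG COM j L).
Proof.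
move=> _ _ hsym _ hE _.
have hC : forall j : 'I_q, Henfa E X Vs Es Xs L AGG COM j L = Hsub Vs Es Xs AGG COM j L.
  move=> j; apply: boolp.funext => v.
  exact: (@lemC _ _ _ _ E X _ Vs Es Xs L AGG COM j (hsym j) (hE j) L (leqnn L) v).
split; first by move=> j v _; rewrite hC.
by congr pool; apply: boolp.funext => j; rewrite hC.
Qed.
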